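(* Let $X$ be an uncountable, $\sigma$-compact, separable metric space. Then $C_p(X)$ is not countable dense homogeneous.
   Context: $C_p(X)$ is the space of continuous functions $X\to\mathbb{R}$ with the topology of pointwise convergence. A space $Y$ is countable dense homogeneous if $Y$ is separable and for any two countable dense subsets $D,E\subseteq Y$ there is a homeomorphism $h\colon Y\to Y$ with $h[D]=E$. *)

(* Defs.v *)
From HB Require Import structures.
From mathcomp Require Import all_boot all_order all_algebra.
From mathcomp Require Import all_classical all_reals all_analysis.
Set Implicit Arguments. Unset Strict Implicit. Unset Printing Implicit Defensive.
Import Order.TTheory GRing.Theory Num.Theory.
Import numFieldTopology.Exports numFieldNormedType.Exports.
Local Open Scope classical_set_scope.
Local Open Scope ring_scope.

Definition cont_funs (R : realType) (X : topologicalType) : set {ptws X -> R} :=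
  [set f | continuous (f : X -> R)].

(* C_p(X): continuous functions with the (subspace of the) pointwise topology;
   [set_type A] carries the initial topology induced by the inclusion. *)
Definition Cp (R : realType) (X : topologicalType) : topologicalType :=
  set_type (@cont_funs R X).

Definition separable_space (Y : topologicalType) : Prop :=
  exists D : set Y, countable D /\ dense D.

Definition sigma_compact (Y : topologicalType) : Prop :=
  exists K : nat -> set Y, (forall n, compact (K n)) /\ \bigcup_n K n = setT.

Definition homeomorphism (Y : topologicalType) (h : Y -> Y) : Prop :=
  exists g : Y -> Y, [/\ cancel h g, cancel g h, continuous h & continuous g].

Definition CDH (Y : topologicalType) : Prop :=
  separable_space Y /\
  forall D E : set Y, countable D -> dense D -> countable E -> dense E ->
    exists h : Y -> Y, homeomorphism h /\ h @` D = E.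

(* Main.v *)
Require Import Defs.
From HB Require Import structures.
From mathcomp Require Import all_boot all_order all_algebra.
From mathcomp Require Import all_classical all_reals all_analysis.
From mathcomp Require Import borel_hierarchy lra ring.
Import Order.TTheory GRing.Theory Num.Theory.
Import numFieldTopology.Exports numFieldNormedType.Exports.
Local Open Scope classical_set_scope.
Local Open Scope ring_scope.


Definition upair (n : nat) : nat * nat := odflt (0%N, 0%N) (unpickle n).
Lemma upairK (x : nat * nat) : upair (pickle x) = x.
Proof. by rewrite /upair pickleK. Qed.

Section GdeltaLemmas.
Context {T : topologicalType}.

Lemma GdeltaU (A B : set T) : Gdelta A -> Gdelta B -> Gdelta (A `|` B).
Proof.
move=> [U oU ->] [V oV ->].
exists (fun n => U (upair n).1 `|` V (upair n).2).
  by move=> n; apply: openU.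
apply/seteqP; split=> x.
  by move=> [xU|xV] n _; [left; apply: xU|right; apply: xV].
move=> H; have [xU|nxU] := pselect ((\bigcap_i U i) x); first by left.
right => j _.
have [i /= nUi] : exists i, ~ U i x.
  by apply: contrapT => hn; apply: nxU => i _; apply: contrapT => hi; apply: hn; exists i.
by have := H (pickle (i, j)) I; rewrite upairK /= => -[].
Qed.

Lemma Gdelta_bigcap (A : nat -> set T) : (forall m, Gdelta (A m)) ->
  Gdelta (\bigcap_m A m).
Proof.
move=> HA.
have [U HU] := @choice nat (nat -> set T)
    (fun m F => (forall i, open (F i)) /\ A m = \bigcap_i F i)
    (fun m => match HA m with ex_intro2 F oF eF => ex_intro _ F (conj oF eF) end).
exists (fun n => U (upair n).1 (upair n).2).
  by move=> n; apply: (proj1 (HU _)).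
apply/seteqP; split=> x.
  by move=> H n _; have := H (upair n).1 I; rewrite (proj2 (HU _)); apply.
move=> H m _; rewrite (proj2 (HU m)) => i _.
by have := H (pickle (m, i)) I; rewrite upairK.
Qed.

Lemma Gdelta_preimage {S : topologicalType} (g : S -> T) (A : set T) :
  continuous g -> Gdelta A -> Gdelta (g @^-1` A).
Proof.
move=> cg [U oU ->]; exists (fun n => g @^-1` U n).
  by move=> n; apply: (proj1 (continuousP _) cg).
by apply/seteqP; split=> x /= H n _; apply: H.
Qed.

Lemma Gdelta_finite_range (O : set T) (g : nat -> T) :
  open O -> (forall x : T, Gdelta [set x]) ->
  forall m, Gdelta (O `|` [set g k | k in [set k | (k <= m)%N]]).
Proof.
move=> oO G1; elim=> [|m IH].
  have -> : O `|` [set g k | k in [set k | (k <= 0)%N]] = O `|` [set g 0%N].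
    apply/seteqP; split=> x [xO|]; try by left.
      by move=> [k /= k0 <-]; right; move: k0; rewrite leqn0 => /eqP ->.
    by move=> ->; right; exists 0%N.
  by apply: GdeltaU; [exact: open_Gdelta|exact: G1].
have -> : O `|` [set g k | k in [set k | (k <= m.+1)%N]] =
    (O `|` [set g k | k in [set k | (k <= m)%N]]) `|` [set g m.+1].
  apply/seteqP; split=> x.
    move=> [xO|[k /= km <-]]; first by left; left.
    move: km; rewrite leq_eqVlt => /orP[/eqP[->]|km]; first by right.
    by left; right; exists k.
  move=> [[xO|[k /= km <-]]|->]; first by left.
    by right; exists k => //=; apply: leqW.
  by rewrite /setU /=; right; exists m.+1.
by apply: GdeltaU => //; exact: G1.
Qed.

End GdeltaLemmas.

Lemma enum_countable T (A : set T) (a : T) : countable A ->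
  exists g : nat -> T, A `<=` range g.
Proof.
move=> /countable_injP[f finj].
pose g n := match pselect (exists x, A x /\ f x = n) with
  | left h => proj1_sig (cid h) | right _ => a end.
exists g => x Ax; exists (f x) => //.
rewrite /g; case: pselect => [h|]; last by move=> /(_ (ex_intro _ x (conj Ax erefl))).
case: (cid h) => y [Ay fy] /=.
by apply: finj; rewrite ?inE.
Qed.


Section Ybasics.
Context {R : realType} {X : topologicalType}.
Local Notation Y := (@Cp R X).

Lemma ev_cont (x : X) : continuous (fun f : Y => (sval f : X -> R) x).
Proof.
move=> f.
apply: (@continuous_comp Y {ptws X -> R} R (fun g : Y => sval g) (fun g : {ptws X -> R} => g x) f).
  exact: initial_continuous.
exact: proj_continuous.
Qed.

Definition mkY (f : X -> R) (cf : continuous f) : Y :=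
  @exist _ _ (f : {ptws X -> R}) (mem_set cf).

Lemma mkY_val f cf : sval (@mkY f cf) = f.
Proof. by []. Qed.

Lemma Y_open (O : set Y) : open O -> exists2 W : set {ptws X -> R}, open W & O = sval @^-1` W.
Proof. by case=> W oW <-; exists W. Qed.


Lemma Y_seq_hit (u : nat -> Y) (y : Y) :
  (forall t : X, exists N, forall n, (N <= n)%N -> sval (u n) t = sval y t) ->
  forall O : set Y, open O -> O y -> exists n, O (u n).
Proof.
move=> hu O /Y_open[W oW ->] Wy.
have cv : (fun n => (sval (u n) : {ptws X -> R})) @ \oo --> (sval y : {ptws X -> R}).
  apply/pointwise_cvgP => t.
  have [N HN] := hu t.
  apply: cvg_near_cst; exists N => // n /= Nn; exact: HN.
have : nbhs (sval y : {ptws X -> R}) W by apply: open_nbhs_nbhs.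
move=> nW; have := cv W nW. move=> h; have [n Hn] := (@filter_ex _ \oo _ _ h). by exists n.
Qed.

Definition cstY (r : R) : Y := @mkY (fun _ => r) (fun x => cvg_cst _).

Lemma cstY_cont : continuous cstY.
Proof.
apply: continuous_comp_initial => r.
apply/pointwise_cvgP => t /=.
exact: cvg_id.
Qed.

End Ybasics.


Section Metric.
Context {R : realType} {X : metricType R}.
Local Notation dist := (@mdist R X).

Lemma lip_cont (f : X -> R) (K : R) : 0 < K ->
  (forall x y, `|f x - f y| <= K * dist x y) -> continuous f.
Proof.
move=> K0 Hf x; apply/cvgrPdist_lt => e e0.
apply/nbhs_ballP; exists (e / K); first by rewrite /= divr_gt0.
move=> y; rewrite ballEmdist /= => hxy.
apply: (le_lt_trans (Hf x y)).
by rewrite -ltr_pdivlMl // mulrC.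
Qed.

Lemma dist_lip (a x y : X) : `|dist a x - dist a y| <= dist x y.
Proof.
have t1 := metric_triangle a x y; have t2 := metric_triangle a y x.
rewrite (metric_sym y x) in t2.
rewrite ler_norml; apply/andP; split; lra.
Qed.

Lemma max0_lip (a b : R) : `|Num.max 0 a - Num.max 0 b| <= `|a - b|.
Proof.
have n1 := ler_norm (a - b); have n2 := ler_norm (b - a).
rewrite distrC in n2.
rewrite /Num.max; case: ifP => h1; case: ifP => h2;
  try (move/negbT: h1; rewrite -leNgt => h1);
  try (move/negbT: h2; rewrite -leNgt => h2);
  rewrite ler_norml; apply/andP; split; lra.
Qed.


Lemma eventually_inv (e : R) : 0 < e ->
  exists N, forall n, (N <= n)%N -> n.+1%:R^-1 < e.
Proof.
move=> e0; have := near_infty_natSinv_lt (PosNum e0).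
move=> [N _ HN]; exists N => n Nn; exact: HN.
Qed.

Variables (p : X) (pp : nat -> X).
Hypothesis hpp : forall i, pp i != p.
Hypothesis hdist : forall i, dist p (pp i) < i.+1%:R^-1.

Definition rad i := dist p (pp i) / 2.
Lemma rad_gt0 i : 0 < rad i.
Proof. by rewrite /rad divr_gt0 // mdist_gt0 eq_sym hpp. Qed.

Definition phi i x := Num.max 0 (1 - dist (pp i) x / rad i).

Lemma phi_cont i : continuous (phi i).
Proof.
apply: (@lip_cont _ (rad i)^-1); first by rewrite invr_gt0 rad_gt0.
move=> x y; apply: (le_trans (max0_lip _ _)).
have -> : 1 - dist (pp i) x / rad i - (1 - dist (pp i) y / rad i) =
   - ((dist (pp i) x - dist (pp i) y) / rad i) by rewrite mulrBl; ring.
rewrite normrN normrM [`|(rad i)^-1|]gtr0_norm ?invr_gt0 ?rad_gt0 // mulrC.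
by rewrite ler_wpM2l ?invr_ge0 ?(ltW (rad_gt0 i)) // dist_lip.
Qed.

Lemma phi_pp i : phi i (pp i) = 1.
Proof. by rewrite /phi mdistxx mul0r subr0 /Num.max ltr01. Qed.

Lemma phi_p i : phi i p = 0.
Proof.
rewrite /phi metric_sym /rad.
have d0 : 0 < dist p (pp i) by rewrite mdist_gt0 eq_sym hpp.
have -> : dist p (pp i) / (dist p (pp i) / 2) = 2.
  by rewrite invf_div mulrA mulrC mulrA mulVf ?mul1r // gt_eqF.
by rewrite /Num.max; case: ifP => //; lra.
Qed.

Lemma phi_ge0 i x : 0 <= phi i x.
Proof. by rewrite /phi le_max lexx. Qed.

Lemma phi_ev0 x : exists N, forall i, (N <= i)%N -> phi i x = 0.
Proof.
have [->|xp] := eqVneq x p; first by exists 0%N => i _; exact: phi_p.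
have d0 : 0 < dist p x by rewrite mdist_gt0 eq_sym xp.
have [N HN] := eventually_inv (dist p x / 2) (divr_gt0 d0 (ltr0Sn _ 1)).
exists N => i Ni.
have h1 := HN i Ni; have h2 := hdist i.
have t := metric_triangle p (pp i) x.
have r0 := rad_gt0 i.
have dpp : 0 < dist p (pp i) by rewrite mdist_gt0 eq_sym hpp.
have : rad i <= dist (pp i) x.
  rewrite /rad; move: h1 h2 t dpp; move: (i.+1%:R^-1) (mdist p x) (mdist p (pp i)) (mdist (pp i) x) => a b c d; lra.
move=> h; have h' : 1 <= dist (pp i) x / rad i by rewrite ler_pdivlMr // mul1r.
rewrite /phi /Num.max; case: ifP => //; move: h'; move: (dist (pp i) x / rad i) => a.
move=> h1' h2'; exfalso; move: h1' h2'; lra.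
Qed.
End Metric.

Section Main.
Context {R : realType} {X : metricType R}.
Implicit Types (f g : X -> R).
Local Notation Y := (@Cp R X).
Local Notation dist := (@mdist R X).

Lemma dist_cont (a : X) : continuous (dist a).
Proof.
apply: (@lip_cont _ _ _ 1) => // x y; rewrite mul1r; exact: dist_lip.
Qed.

Lemma open_ballX (a : X) (e : R) : open (ball a e).
Proof.
rewrite ballEmdist.
have -> : [set y | dist a y < e] = dist a @^-1` [set r | r < e] by [].
by apply: (proj1 (continuousP _) (dist_cont a)); exact: open_lt.
Qed.

Lemma Y_cont (f : Y) : continuous (sval f : X -> R).
Proof. exact: (set_mem (svalP f)). Qed.

Lemma Y_eq (f g : Y) : (sval f : X -> R) = sval g -> f = g.
Proof. by move=> h; apply: eq_sig_hprop => // x u v; exact: Prop_irrelevance. Qed.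

Lemma dense_eq {f g : X -> R} {Dn : set X} : continuous f -> continuous g ->
  dense Dn -> (forall x, Dn x -> f x = g x) -> f = g.
Proof.
move=> cf cg dD hfg; apply: funext => x; apply: contrapT => nfg.
pose h := fun y => `|f y - g y|.
have ch : continuous h.
  move=> y; apply: (@continuous_comp _ _ _ (fun y => f y - g y) Num.norm y); last exact: norm_continuous.
  exact: (cvgB (cf y) (cg y)).
have oO : open (h @^-1` [set r | 0 < r]).
  by apply: (proj1 (continuousP _) ch); exact: open_gt.
have ne : (h @^-1` [set r | 0 < r]) !=set0.
  by exists x; rewrite /= /h normr_gt0 subr_eq0; apply/eqP.
have [y [/= hy Dy]] := dD _ ne oO.
by move: hy; rewrite /h hfg // subrr normr0 ltxx.
Qed.


Lemma ev_dist_cont (x : X) (c : R) : continuous (fun g : Y => `|sval g x - c|).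
Proof.
move=> g; apply: (@continuous_comp _ _ _ (fun g : Y => sval g x - c) Num.norm g);
  last exact: norm_continuous.
exact: (cvgB (ev_cont x g) (cvg_cst _)).
Qed.

Lemma Y_set1_Gdelta (q : nat -> X) : dense (range q) -> forall f0 : Y, Gdelta [set f0].
Proof.
move=> dq f0.
exists (fun n => (fun g : Y => `|sval g (q (upair n).1) - sval f0 (q (upair n).1)|)
   @^-1` [set r | r < (upair n).2.+1%:R^-1]).
  by move=> n; apply: (proj1 (continuousP _) (ev_dist_cont _ _)); exact: open_lt.
apply/seteqP; split=> g.
  by move=> -> n _ /=; rewrite subrr normr0 invr_gt0 ltr0Sn.
move=> H /=; apply: Y_eq.
have -> // := dense_eq (Y_cont g) (Y_cont f0) dq.
move=> _ [a _ <-].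
apply: contrapT => ne.
have pos : 0 < `|sval g (q a) - sval f0 (q a)|.
  by rewrite normr_gt0 subr_eq0; apply/eqP.
have [N HN] := eventually_inv _ pos.
have := H (pickle (a, N)) I; rewrite /= upairK /=.
by move=> /(lt_trans (HN N (leqnn N))); rewrite ltxx.
Qed.


Section Construction.
Variables (p : X) (pp : nat -> X).
Hypothesis hpp : forall i, pp i != p.
Hypothesis hdist : forall i, dist p (pp i) < i.+1%:R^-1.
Variable s : nat -> Y.

Definition cc n := n.+1%:R + `|sval (s (upair n).1) (pp (upair n).2)|
   + `|sval (s (upair n).1) p|.

Definition dfun n : X -> R := fun x =>
  sval (s (upair n).1) x + cc n * phi p pp (upair n).2 x.

Lemma dfun_cont n : continuous (dfun n).
Proof.
move=> x; apply: (cvgD (Y_cont _ x)).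
apply: (cvgM (cvg_cst _)); exact: (@phi_cont _ _ p pp hpp _ x).
Qed.

Definition d n : Y := @mkY R X (dfun n) (dfun_cont n).

Definition FF (m : nat) : set Y := [set f | forall i, `|sval f (pp i)| <= m%:R].

Lemma d_big n : n.+1%:R <= `|sval (d n) (pp (upair n).2)| /\ n.+1%:R <= sval (d n) (pp (upair n).2) - sval (d n) p.
Proof.
rewrite /= /dfun phi_pp (@phi_p _ _ p pp hpp) mulr1 mulr0 addr0 /cc.
set a := sval _ (pp _); set b := sval _ p.
have h1 := ler_norm a; have h2 := ler_norm (- a); rewrite normrN in h2.
have h3 := ler_norm b; have h4 := ler_norm (- b); rewrite normrN in h4.
have h5 := ler_norm (a + (n.+1%:R + `|a| + `|b|)).
split; lra.
Qed.

Lemma d_notF n m : (m < n)%N -> ~ FF m (d n).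
Proof.
move=> mn /(_ (upair n).2) h; have [h1 _] := d_big n.
have : m%:R < n.+1%:R :> R by rewrite ltr_nat ltnS ltnW.
lra.
Qed.

Lemma d_ncst n r : d n <> cstY r.
Proof.
move=> e; have [_ h] := d_big n.
have e1 : sval (d n) (pp (upair n).2) = r by rewrite e.
have e2 : sval (d n) p = r by rewrite e.
rewrite e1 e2 subrr in h.
have := ltr0Sn R n; lra.
Qed.


Lemma FF_closed m : closed (FF m).
Proof.
have -> : FF m = \bigcap_(i in setT)
    ((fun f : Y => `|sval f (pp i)|) @^-1` [set r | r <= m%:R]).
  by apply/seteqP; split=> f H i; [move=> _; apply: H | apply: H].
apply: closed_bigI => i _; apply: preimage_closed; last exact: closed_le.
move=> g _; apply: (@continuous_comp _ _ _ (fun g : Y => sval g (pp i)) Num.norm g).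
  exact: ev_cont.
exact: norm_continuous.
Qed.

Lemma FF_cover (f : Y) : exists m, FF m f.
Proof.
have cf := Y_cont f p.
have := (proj1 (cvgrPdist_lt _ _)) cf 1 ltr01.
move=> H0; have := (proj1 (nbhs_ballP _ _)) (H0 _); move=> [e /= e0 He].
have [N HN] := eventually_inv _ e0.
have [M [M0 HM]] : exists M, 0 <= M /\ forall i, (i < N)%N -> `|sval f (pp i)| <= M.
  elim: (N) => [|N' [M [M0 HM]]]; first by exists 0.
  exists (M + `|sval f (pp N')|); split; first by rewrite addr_ge0.
  move=> i; rewrite ltnS leq_eqVlt => /orP[/eqP->|iN]; first by rewrite lerDr.
  by rewrite (le_trans (HM _ iN)) // lerDl.
have B0 : 0 <= M + `|sval f p| + 1 by rewrite !addr_ge0.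
exists (Num.Def.archi_bound (M + `|sval f p| + 1)) => i.
have hB := archi_boundP B0.
case: (ltnP i N) => [iN|Ni].
  by have := HM i iN; have := normr_ge0 (sval f p); lra.
have : ball p e (pp i) by rewrite ballEmdist /=; exact: lt_trans (hdist i) (HN i Ni).
move=> /He /= h.
have t := ler_normD (sval f p) (sval f (pp i) - sval f p).
rewrite addrC subrK distrC in t.
lra.
Qed.

Lemma D0_Gdelta (q : nat -> X) : dense (range q) -> Gdelta (range d).
Proof.
move=> dq.
have -> : range d = \bigcap_m (~` FF m `|` [set d k | k in [set k | (k <= m)%N]]).
  apply/seteqP; split.
    move=> _ [n _ <-] m _.
    case: (leqP n m) => nm; [right; exists n => //|left; exact: d_notF].
  move=> f H; have [m Fm] := FF_cover f.
  by case: (H m I) => // -[k _ <-]; exists k.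
apply: Gdelta_bigcap => m.
apply: Gdelta_finite_range; [rewrite openC; exact: FF_closed| exact: Y_set1_Gdelta dq].
Qed.

Lemma D0_dense (S : set Y) : dense S -> S `<=` range s -> dense (range d).
Proof.
move=> dS Ss O O0 oO.
have [f [Of Sf]] := dS O O0 oO.
have [j _ fj] := Ss f Sf.
have hu : forall t : X, exists N, forall k, (N <= k)%N ->
    sval (d (pickle (j, k))) t = sval f t.
  move=> t; have [N HN] := @phi_ev0 R X p pp hpp hdist t.
  exists N => k Nk; rewrite /= /dfun upairK /= HN // mulr0 addr0 fj //.
have [k Ok] := @Y_seq_hit R X (fun k => d (pickle (j, k))) f hu O oO Of.
by exists (d (pickle (j,k))); split => //; exists (pickle (j,k)).
Qed.

End Construction.

End Main.

Theorem mainTheorem3 (R : realType) (X : metricType R) :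
  ~ countable [set: X] -> sigma_compact X -> separable_space X ->
  ~ CDH (@Cp R X).
Proof.
move=> Xunc _ [QX [QXc QXd]] [[S [Sc Sd]] Hcdh].
have [p npQ] : exists p : X, ~ QX p.
  apply: contrapT => H; apply: Xunc.
  apply: (sub_countable _ QXc); apply: subset_card_le => x _.
  by apply: contrapT => nx; apply: H; exists x.
have hb : forall i : nat, exists y : X, QX y /\ mdist p y < i.+1%:R^-1.
  move=> i.
  have ipos : 0 < i.+1%:R^-1 :> R by rewrite invr_gt0 ltr0Sn.
  have [y [By Qy]] := QXd (ball p (i.+1%:R^-1)) (ex_intro _ p (ballxx _ ipos))
     (open_ballX p _).
  by exists y; split => //; move: By; rewrite ballEmdist.
have [pp hpp'] := choice hb.
have hpp : forall i, pp i != p.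
  move=> i; apply/eqP => e; apply: npQ; rewrite -e; exact: (hpp' i).1.
have hdist : forall i, mdist p (pp i) < i.+1%:R^-1 by move=> i; exact: (hpp' i).2.
have [q Qq] := @enum_countable _ QX p QXc.
have dq : dense (range q).
  move=> O O0 oO; have [x [Ox Qx]] := QXd O O0 oO.
  by have [n _ qn] := Qq x Qx; exists x; split => //; exists n.
have [s Ss] := @enum_countable _ S (cstY 0) Sc.
pose dd := @d R X p pp hpp s.
have D0G : Gdelta (range dd) := @D0_Gdelta R X p pp hpp hdist s q dq.
have D0d : dense (range dd) := @D0_dense R X p pp hpp hdist s S Sd Ss.
pose eE := fun z : nat + rat => match z with inl n => dd n | inr r => cstY (ratr r) end.
have D0c : countable (range dd) := card_image_le _ _.
have Ec : countable (range eE).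
  apply: (card_le_trans (card_image_le _ _)); exact: countableP.
have Ed : dense (range eE).
  move=> O O0 oO; have [y [Oy [n _ ny]]] := D0d O O0 oO.
  by exists y; split => //; exists (inl n).
have [h [[g [hK gK hc gc]] hDE]] := Hcdh _ _ D0c D0d Ec Ed.
have EG : Gdelta (range eE).
  have -> : range eE = g @^-1` range dd.
    rewrite -hDE; apply/seteqP; split.
      by move=> _ [y Dy <-]; rewrite /= hK.
    by move=> x /= Dx; exists (g x) => //; rewrite gK.
  exact: Gdelta_preimage gc D0G.
apply: (@not_rational_Gdelta R).
have -> : @rational R = cstY @^-1` range eE.
  apply/seteqP; split.
    by move=> _ [r0 _ <-]; exists (inr r0).
  move=> r /= [[n|r0] _ e].
    by exfalso; apply: (@d_ncst R X p pp hpp s n r).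
  have : sval (cstY (ratr r0) : Cp R X) p = sval (cstY r : Cp R X) p by rewrite /eE in e; rewrite e.
  by move=> /= <-; exists r0.
exact: Gdelta_preimage cstY_cont EG.
Qed.
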